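(* Let $(Q,\cdot)$ be a quadratical quasigroup and $a,b\in Q$ distinct. Then for every integer $t>1$ and every $k\in\{1,2,3,4\}$, $aba\cdot tk=(t-1)k$.
   Context: A quadratical quasigroup is a quasigroup satisfying $xy\cdot x=zx\cdot yz$ (equivalently, a groupoid satisfying $x\cdot x=x$, $yx\cdot xy=x$, $xy\cdot zw=xz\cdot yw$). $aba$ denotes $ab\cdot a$. The elements $tk$ are defined by $11=a$, $12=ab$, $13=ba$, $14=b$ and, for $n\ge2$, $n1=(n-1)1\cdot(n-1)2$, $n2=(n-1)2\cdot(n-1)4$, $n3=(n-1)3\cdot(n-1)1$, $n4=(n-1)4\cdot(n-1)3$. *)

(* Defs.v *)
From Stdlib Require Import Arith.

Definition is_quasigroup {Q : Type} (mul : Q -> Q -> Q) : Prop :=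
  (forall a b : Q, exists! x : Q, mul a x = b) /\
  (forall a b : Q, exists! y : Q, mul y a = b).

Definition quadratical {Q : Type} (mul : Q -> Q -> Q) : Prop :=
  is_quasigroup mul /\
  forall x y z : Q, mul (mul x y) x = mul (mul z x) (mul y z).

(* The elements tk: elt mul a b t = (t1, t2, t3, t4) where
   t = n.+1 (so elt ... 0 gives the row "1"). *)
Fixpoint elt_row {Q : Type} (mul : Q -> Q -> Q) (a b : Q) (n : nat)
  : Q * Q * Q * Q :=
  match n with
  | O => (a, mul a b, mul b a, b)
  | S m =>
      let '(x1, x2, x3, x4) := elt_row mul a b m in
      (mul x1 x2, mul x2 x4, mul x3 x1, mul x4 x3)
  end.

(* tk for t >= 1 and k in {1,2,3,4}; (t, k) outside that range is junk. *)
Definition tk {Q : Type} (mul : Q -> Q -> Q) (a b : Q) (t k : nat) : Q :=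
  let '(x1, x2, x3, x4) := elt_row mul a b (t - 1) in
  match k with
  | 1 => x1
  | 2 => x2
  | 3 => x3
  | _ => x4
  end.

(* Main.v *)
Require Import Defs.
From Stdlib Require Import Arith Lia IndefiniteDescription.
Definition Ax (Q:Type) (mul ld rd: Q->Q->Q) : Prop :=
  (forall x y z, mul (mul z x) (mul y z) = mul (mul x y) x) /\
  (forall x y, ld x (mul x y) = y) /\ (forall x y, mul x (ld x y) = y) /\
  (forall x y, rd (mul x y) y = x) /\ (forall x y, mul (rd x y) y = x).
Definition mm {Q:Type} (mul:Q->Q->Q) (x y:Q) := mul (mul x y) x.
Lemma E4 (Q:Type) (mul ld rd:Q->Q->Q) (H:Ax Q mul ld rd) : forall X Y : Q, (mul X (ld X Y)) = Y.
Proof.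
  destruct H as (A1&A2&A3&A4&A5); unfold mm; intros; auto.
Qed.

Lemma E2 (Q:Type) (mul ld rd:Q->Q->Q) (H:Ax Q mul ld rd) : forall Z X Y : Q, (mul (mul Z X) (mul Y Z)) = (mul (mul X Y) X).
Proof.
  destruct H as (A1&A2&A3&A4&A5); unfold mm; intros; auto.
Qed.

Lemma E3 (Q:Type) (mul ld rd:Q->Q->Q) (H:Ax Q mul ld rd) : forall X Y : Q, (ld X (mul X Y)) = Y.
Proof.
  destruct H as (A1&A2&A3&A4&A5); unfold mm; intros; auto.
Qed.

Lemma E1 (Q:Type) (mul ld rd:Q->Q->Q) (H:Ax Q mul ld rd) : forall X Y : Q, (mm mul X Y) = (mul (mul X Y) X).
Proof.
  destruct H as (A1&A2&A3&A4&A5); unfold mm; intros; auto.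
Qed.

Lemma E15 (Q:Type) (mul ld rd:Q->Q->Q) (H:Ax Q mul ld rd) : forall X0 X1 X2 : Q, (ld (mul X0 X1) (mm mul X1 X2)) = (mul X2 X0).
Proof.
  intros X0 X1 X2.
  pose proof (E2 Q mul ld rd H X0 X1 X2) as H0.
  pose proof (E3 Q mul ld rd H (mul X0 X1) (mul X2 X0)) as H1.
  pose proof (E1 Q mul ld rd H X1 X2) as H2.
  congruence.
Qed.

Lemma E34 (Q:Type) (mul ld rd:Q->Q->Q) (H:Ax Q mul ld rd) : forall X0 X1 X2 : Q, (mul (mul X0 X1) (mul X2 X0)) = (mm mul X1 X2).
Proof.
  intros X0 X1 X2.
  pose proof (E15 Q mul ld rd H X0 X1 X2) as H0.
  pose proof (E4 Q mul ld rd H (mul X0 X1) (mm mul X1 X2)) as H1.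
  congruence.
Qed.

Lemma E59 (Q:Type) (mul ld rd:Q->Q->Q) (H:Ax Q mul ld rd) : forall X0 X1 X2 : Q, (mul X0 (mul X1 X2)) = (mm mul (ld X2 X0) X1).
Proof.
  intros X0 X1 X2.
  pose proof (E4 Q mul ld rd H X2 X0) as H0.
  pose proof (E34 Q mul ld rd H X2 (ld X2 X0) X1) as H1.
  congruence.
Qed.

Lemma E9 (Q:Type) (mul ld rd:Q->Q->Q) (H:Ax Q mul ld rd) : forall X0 X1 : Q, (ld (mul X0 X1) (mm mul X0 X1)) = X0.
Proof.
  intros X0 X1.
  pose proof (E1 Q mul ld rd H X0 X1) as H0.
  pose proof (E3 Q mul ld rd H (mul X0 X1) X0) as H1.
  congruence.
Qed.

Lemma E16 (Q:Type) (mul ld rd:Q->Q->Q) (H:Ax Q mul ld rd) : forall X0 : Q, (mul X0 X0) = X0.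
Proof.
  intros X0.
  pose proof (E15 Q mul ld rd H X0 X0 X0) as H0.
  pose proof (E9 Q mul ld rd H X0 X0) as H1.
  congruence.
Qed.

Lemma E35 (Q:Type) (mul ld rd:Q->Q->Q) (H:Ax Q mul ld rd) : forall X0 X1 : Q, (mm mul X0 X1) = (mm mul X1 X0).
Proof.
  intros X0 X1.
  pose proof (E16 Q mul ld rd H X0) as H0.
  pose proof (E34 Q mul ld rd H X0 X1 X0) as H1.
  pose proof (E1 Q mul ld rd H X0 X1) as H2.
  congruence.
Qed.

Lemma E39 (Q:Type) (mul ld rd:Q->Q->Q) (H:Ax Q mul ld rd) : forall X0 X1 X2 : Q, (ld X0 (mm mul (ld X1 X0) X2)) = (mul X2 X1).
Proof.
  intros X0 X1 X2.
  pose proof (E4 Q mul ld rd H X1 X0) as H0.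
  pose proof (E15 Q mul ld rd H X1 (ld X1 X0) X2) as H1.
  congruence.
Qed.

Lemma E20 (Q:Type) (mul ld rd:Q->Q->Q) (H:Ax Q mul ld rd) : forall X0 X1 : Q, (ld X0 (mm mul X0 X1)) = (mul X1 X0).
Proof.
  intros X0 X1.
  pose proof (E16 Q mul ld rd H X0) as H0.
  pose proof (E15 Q mul ld rd H X0 X0 X1) as H1.
  congruence.
Qed.

Lemma E37 (Q:Type) (mul ld rd:Q->Q->Q) (H:Ax Q mul ld rd) : forall X0 X1 : Q, (ld X0 (mm mul X1 X0)) = (mul X1 X0).
Proof.
  intros X0 X1.
  pose proof (E35 Q mul ld rd H X0 X1) as H0.
  pose proof (E20 Q mul ld rd H X0 X1) as H1.
  congruence.
Qed.

Lemma E40 (Q:Type) (mul ld rd:Q->Q->Q) (H:Ax Q mul ld rd) : forall X0 X1 : Q, (mul X0 X1) = (mul (ld X1 X0) X0).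
Proof.
  intros X0 X1.
  pose proof (E39 Q mul ld rd H X0 X1 X0) as H0.
  pose proof (E37 Q mul ld rd H X0 (ld X1 X0)) as H1.
  congruence.
Qed.

Lemma E141 (Q:Type) (mul ld rd:Q->Q->Q) (H:Ax Q mul ld rd) : forall X0 X1 X2 : Q, (mm mul X0 (ld X1 (mul X0 X2))) = (mm mul X2 (ld X1 X0)).
Proof.
  intros X0 X1 X2.
  pose proof (E40 Q mul ld rd H X0 X1) as H0.
  pose proof (E34 Q mul ld rd H X0 X2 (ld X1 X0)) as H1.
  pose proof (E59 Q mul ld rd H (mul X0 X2) X0 X1) as H2.
  pose proof (E35 Q mul ld rd H (ld X1 (mul X0 X2)) X0) as H3.
  congruence.
Qed.

Lemma GOALL (Q:Type) (mul ld rd:Q->Q->Q) (H:Ax Q mul ld rd) : forall a b c : Q, (mul a (mul b c)) = (mul (mul a b) (mul a c)).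
Proof.
  intros a b c.
  pose proof (E59 Q mul ld rd H a b c) as H0.
  pose proof (E35 Q mul ld rd H (ld c a) b) as H1.
  pose proof (E59 Q mul ld rd H (mul a b) a c) as H2.
  pose proof (E35 Q mul ld rd H (ld c (mul a b)) a) as H3.
  pose proof (E141 Q mul ld rd H a c b) as H4.
  congruence.
Qed.

Lemma F6 (Q:Type) (mul ld rd:Q->Q->Q) (H:Ax Q mul ld rd) : forall X Y : Q, (mul (rd X Y) Y) = X.
Proof.
  destruct H as (A1&A2&A3&A4&A5); unfold mm; intros; auto.
Qed.

Lemma F2 (Q:Type) (mul ld rd:Q->Q->Q) (H:Ax Q mul ld rd) : forall Z X Y : Q, (mul (mul Z X) (mul Y Z)) = (mul (mul X Y) X).
Proof.
  destruct H as (A1&A2&A3&A4&A5); unfold mm; intros; auto.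
Qed.

Lemma F3 (Q:Type) (mul ld rd:Q->Q->Q) (H:Ax Q mul ld rd) : forall X Y : Q, (ld X (mul X Y)) = Y.
Proof.
  destruct H as (A1&A2&A3&A4&A5); unfold mm; intros; auto.
Qed.

Lemma F1 (Q:Type) (mul ld rd:Q->Q->Q) (H:Ax Q mul ld rd) : forall X Y : Q, (mm mul X Y) = (mul (mul X Y) X).
Proof.
  destruct H as (A1&A2&A3&A4&A5); unfold mm; intros; auto.
Qed.

Lemma F15 (Q:Type) (mul ld rd:Q->Q->Q) (H:Ax Q mul ld rd) : forall X0 X1 X2 : Q, (ld (mul X0 X1) (mm mul X1 X2)) = (mul X2 X0).
Proof.
  intros X0 X1 X2.
  pose proof (F2 Q mul ld rd H X0 X1 X2) as H0.
  pose proof (F3 Q mul ld rd H (mul X0 X1) (mul X2 X0)) as H1.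
  pose proof (F1 Q mul ld rd H X1 X2) as H2.
  congruence.
Qed.

Lemma F4 (Q:Type) (mul ld rd:Q->Q->Q) (H:Ax Q mul ld rd) : forall X Y : Q, (mul X (ld X Y)) = Y.
Proof.
  destruct H as (A1&A2&A3&A4&A5); unfold mm; intros; auto.
Qed.

Lemma F34 (Q:Type) (mul ld rd:Q->Q->Q) (H:Ax Q mul ld rd) : forall X0 X1 X2 : Q, (mul (mul X0 X1) (mul X2 X0)) = (mm mul X1 X2).
Proof.
  intros X0 X1 X2.
  pose proof (F15 Q mul ld rd H X0 X1 X2) as H0.
  pose proof (F4 Q mul ld rd H (mul X0 X1) (mm mul X1 X2)) as H1.
  congruence.
Qed.

Lemma F61 (Q:Type) (mul ld rd:Q->Q->Q) (H:Ax Q mul ld rd) : forall X0 X1 X2 : Q, (mul (mul X0 X1) X2) = (mm mul X1 (rd X2 X0)).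
Proof.
  intros X0 X1 X2.
  pose proof (F6 Q mul ld rd H X2 X0) as H0.
  pose proof (F34 Q mul ld rd H X0 X1 (rd X2 X0)) as H1.
  congruence.
Qed.

Lemma F59 (Q:Type) (mul ld rd:Q->Q->Q) (H:Ax Q mul ld rd) : forall X0 X1 X2 : Q, (mul X0 (mul X1 X2)) = (mm mul (ld X2 X0) X1).
Proof.
  intros X0 X1 X2.
  pose proof (F4 Q mul ld rd H X2 X0) as H0.
  pose proof (F34 Q mul ld rd H X2 (ld X2 X0) X1) as H1.
  congruence.
Qed.

Lemma F8 (Q:Type) (mul ld rd:Q->Q->Q) (H:Ax Q mul ld rd) : forall X0 X1 : Q, (ld (rd X0 X1) X0) = X1.
Proof.
  intros X0 X1.
  pose proof (F6 Q mul ld rd H X0 X1) as H0.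
  pose proof (F3 Q mul ld rd H (rd X0 X1) X1) as H1.
  congruence.
Qed.

Lemma F39 (Q:Type) (mul ld rd:Q->Q->Q) (H:Ax Q mul ld rd) : forall X0 X1 X2 : Q, (ld X0 (mm mul (ld X1 X0) X2)) = (mul X2 X1).
Proof.
  intros X0 X1 X2.
  pose proof (F4 Q mul ld rd H X1 X0) as H0.
  pose proof (F15 Q mul ld rd H X1 (ld X1 X0) X2) as H1.
  congruence.
Qed.

Lemma F9 (Q:Type) (mul ld rd:Q->Q->Q) (H:Ax Q mul ld rd) : forall X0 X1 : Q, (ld (mul X0 X1) (mm mul X0 X1)) = X0.
Proof.
  intros X0 X1.
  pose proof (F1 Q mul ld rd H X0 X1) as H0.
  pose proof (F3 Q mul ld rd H (mul X0 X1) X0) as H1.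
  congruence.
Qed.

Lemma F16 (Q:Type) (mul ld rd:Q->Q->Q) (H:Ax Q mul ld rd) : forall X0 : Q, (mul X0 X0) = X0.
Proof.
  intros X0.
  pose proof (F15 Q mul ld rd H X0 X0 X0) as H0.
  pose proof (F9 Q mul ld rd H X0 X0) as H1.
  congruence.
Qed.

Lemma F35 (Q:Type) (mul ld rd:Q->Q->Q) (H:Ax Q mul ld rd) : forall X0 X1 : Q, (mm mul X0 X1) = (mm mul X1 X0).
Proof.
  intros X0 X1.
  pose proof (F16 Q mul ld rd H X0) as H0.
  pose proof (F34 Q mul ld rd H X0 X1 X0) as H1.
  pose proof (F1 Q mul ld rd H X0 X1) as H2.
  congruence.
Qed.

Lemma F20 (Q:Type) (mul ld rd:Q->Q->Q) (H:Ax Q mul ld rd) : forall X0 X1 : Q, (ld X0 (mm mul X0 X1)) = (mul X1 X0).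
Proof.
  intros X0 X1.
  pose proof (F16 Q mul ld rd H X0) as H0.
  pose proof (F15 Q mul ld rd H X0 X0 X1) as H1.
  congruence.
Qed.

Lemma F37 (Q:Type) (mul ld rd:Q->Q->Q) (H:Ax Q mul ld rd) : forall X0 X1 : Q, (ld X0 (mm mul X1 X0)) = (mul X1 X0).
Proof.
  intros X0 X1.
  pose proof (F35 Q mul ld rd H X0 X1) as H0.
  pose proof (F20 Q mul ld rd H X0 X1) as H1.
  congruence.
Qed.

Lemma F40 (Q:Type) (mul ld rd:Q->Q->Q) (H:Ax Q mul ld rd) : forall X0 X1 : Q, (mul X0 X1) = (mul (ld X1 X0) X0).
Proof.
  intros X0 X1.
  pose proof (F39 Q mul ld rd H X0 X1 X0) as H0.
  pose proof (F37 Q mul ld rd H X0 (ld X1 X0)) as H1.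
  congruence.
Qed.

Lemma F43 (Q:Type) (mul ld rd:Q->Q->Q) (H:Ax Q mul ld rd) : forall X0 X1 : Q, (mul X0 X1) = (mul X1 (rd X1 X0)).
Proof.
  intros X0 X1.
  pose proof (F8 Q mul ld rd H X1 X0) as H0.
  pose proof (F40 Q mul ld rd H X1 (rd X1 X0)) as H1.
  congruence.
Qed.

Lemma F46 (Q:Type) (mul ld rd:Q->Q->Q) (H:Ax Q mul ld rd) : forall X0 X1 : Q, (ld X0 (mul X1 X0)) = (rd X0 X1).
Proof.
  intros X0 X1.
  pose proof (F43 Q mul ld rd H X1 X0) as H0.
  pose proof (F3 Q mul ld rd H X0 (rd X0 X1)) as H1.
  congruence.
Qed.

Lemma GOALR (Q:Type) (mul ld rd:Q->Q->Q) (H:Ax Q mul ld rd) : forall a b c : Q, (mul (mul b c) a) = (mul (mul b a) (mul c a)).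
Proof.
  intros a b c.
  pose proof (F61 Q mul ld rd H b c a) as H0.
  pose proof (F59 Q mul ld rd H (mul b a) c a) as H1.
  pose proof (F46 Q mul ld rd H a b) as H2.
  pose proof (F35 Q mul ld rd H (rd a b) c) as H3.
  congruence.
Qed.

Lemma get_ax (Q:Type) (mul:Q->Q->Q) : quadratical mul -> exists ld rd, Ax Q mul ld rd.
Proof.
  intros [[HL HR] HA].
  assert (fl : forall x y, {z | mul x z = y}).
  { intros x y. apply constructive_indefinite_description.
    destruct (HL x y) as [z [Hz _]]. exists z; exact Hz. }
  assert (fr : forall x y, {z | mul z x = y}).
  { intros x y. apply constructive_indefinite_description.
    destruct (HR x y) as [z [Hz _]]. exists z; exact Hz. }
  exists (fun x y => proj1_sig (fl x y)), (fun y x => proj1_sig (fr x y)).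
  split; [intros; symmetry; apply HA|]. split; [|split; [|split]]; intros x y.
  - destruct (fl x (mul x y)) as [z Hz]; simpl.
    destruct (HL x (mul x y)) as [w [_ Hw]].
    rewrite <- (Hw z Hz), <- (Hw y eq_refl); reflexivity.
  - destruct (fl x y) as [z Hz]; simpl; exact Hz.
  - destruct (fr y (mul x y)) as [z Hz]; simpl.
    destruct (HR y (mul x y)) as [w [_ Hw]].
    rewrite <- (Hw z Hz), <- (Hw x eq_refl); reflexivity.
  - destruct (fr y x) as [z Hz]; simpl; exact Hz.
Qed.

Theorem proposition3p6 (Q : Type) (mul : Q -> Q -> Q) (a b : Q) :
  quadratical mul -> a <> b ->
  forall t k : nat, 1 < t -> 1 <= k <= 4 ->
  mul (mul (mul a b) a) (tk mul a b t k) = tk mul a b (t - 1) k.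
Proof.
  intros Hq _ t k Ht Hk.
  destruct (get_ax Q mul Hq) as (ld & rd & H).
  pose proof (GOALL Q mul ld rd H) as LD.
  pose proof (GOALR Q mul ld rd H) as RD.
  assert (Id : forall x, mul x x = x).
  { intros x. pose proof (E2 Q mul ld rd H x x x) as H1.
    pose proof (E3 Q mul ld rd H (mul x x) (mul x x)) as H2.
    pose proof (E3 Q mul ld rd H (mul x x) x) as H3. congruence. }
  assert (B : forall x y, mul (mul y x) (mul x y) = x).
  { intros x y. rewrite (E2 Q mul ld rd H y x x), !Id. reflexivity. }
  assert (Fl : forall x y, mul x (mul y x) = mul (mul x y) x).
  { intros x y. pose proof (E2 Q mul ld rd H x x y) as H1. rewrite Id in H1. exact H1. }
  set (c := mul (mul a b) a).
  assert (Main : forall n,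
    let '(x1, x2, x3, x4) := elt_row mul a b (S n) in
    let '(y1, y2, y3, y4) := elt_row mul a b n in
    mul c x1 = y1 /\ mul c x2 = y2 /\ mul c x3 = y3 /\ mul c x4 = y4).
  { induction n as [|n IH].
    - simpl. unfold c. repeat split.
      + rewrite <- Fl, <- LD, B, Id. reflexivity.
      + rewrite <- LD, Id. reflexivity.
      + rewrite <- RD, B. reflexivity.
      + rewrite <- Fl, <- RD, B. reflexivity.
    - change (elt_row mul a b (S (S n))) with
        (let '(x1, x2, x3, x4) := elt_row mul a b (S n) in
         (mul x1 x2, mul x2 x4, mul x3 x1, mul x4 x3)).
      change (elt_row mul a b (S n)) with
        (let '(x1, x2, x3, x4) := elt_row mul a b n in
         (mul x1 x2, mul x2 x4, mul x3 x1, mul x4 x3)) at 2.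
      destruct (elt_row mul a b (S n)) as [[[x1 x2] x3] x4].
      destruct (elt_row mul a b n) as [[[y1 y2] y3] y4].
      destruct IH as (H1 & H2 & H3 & H4).
      repeat split; rewrite LD; congruence. }
  destruct t as [|[|n]]; [inversion Ht | inversion Ht; inversion H1 |].
  unfold tk. replace (S (S n) - 1) with (S n) by lia.
  cbn [Nat.sub]; replace (n - 0) with n by lia.
  specialize (Main n).
  destruct (elt_row mul a b (S n)) as [[[x1 x2] x3] x4].
  destruct (elt_row mul a b n) as [[[y1 y2] y3] y4].
  destruct Main as (H1 & H2 & H3 & H4).
  destruct k as [|[|[|[|[|k]]]]]; simpl; try assumption; try (exfalso; lia).
Qed.
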